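(* For every co-comparability graph $G$, $\operatorname{tw}(G)\le 2\Delta(G)-1$, where $\Delta(G)$ is the maximum degree of $G$.
   Context: A comparability graph is a graph whose vertex set admits a partial order such that two distinct vertices are adjacent iff they are comparable. $G$ is a co-comparability graph if its complement is a comparability graph. The treewidth $\operatorname{tw}(G)$ is the minimum, over all tree decompositions $(\{X_i\},T)$ of $G$ (a tree $T$ with vertex subsets $X_i$ at its nodes covering all vertices and all edges, such that for each vertex the nodes containing it form a connected subtree), of $\max_i|X_i|-1$. *)

(* Defs.v *)
From mathcomp Require Import all_boot.
Set Implicit Arguments. Unset Strict Implicit. Unset Printing Implicit Defensive.

Definition simple_graph (T : finType) (e : rel T) : Prop :=
  symmetric e /\ irreflexive e.

Definition partial_order (T : finType) (r : rel T) : Prop :=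
  reflexive r /\ antisymmetric r /\ transitive r.

Definition comparability_graph (T : finType) (e : rel T) : Prop :=
  exists r : rel T, partial_order r /\
    forall x y : T, x != y -> e x y = (r x y || r y x).

Definition complement_rel (T : finType) (e : rel T) : rel T :=
  fun x y => (x != y) && ~~ e x y.

Definition cocomparability_graph (T : finType) (e : rel T) : Prop :=
  comparability_graph (complement_rel e).

Definition degree (T : finType) (e : rel T) (v : T) : nat := #|[set u | e v u]|.
Definition max_degree (T : finType) (e : rel T) : nat := \max_(v : T) degree e v.

Definition has_cycle (I : finType) (t : rel I) : Prop :=
  exists (x : I) (p : seq I),
    [/\ 2 <= size p, uniq (x :: p), path t x p & t (last x p) x].

Definition is_tree (I : finType) (t : rel I) : Prop :=
  [/\ simple_graph t, (forall i j : I, connect t i j) & ~ has_cycle t].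

Definition tree_decomposition (T : finType) (e : rel T)
  (I : finType) (t : rel I) (B : I -> {set T}) : Prop :=
  [/\ is_tree t,
      (forall v : T, exists i : I, v \in B i),
      (forall u v : T, e u v -> exists i : I, (u \in B i) && (v \in B i)) &
      (forall (v : T) (i j : I), v \in B i -> v \in B j ->
          connect [rel a b | [&& t a b, v \in B a & v \in B b]] i j)].

(* tw(G) <= k  (for k : nat): some tree decomposition has all bags of size <= k+1.
   This is the literal unfolding of "min over decompositions of (max bag size - 1) <= k". *)
Definition treewidth_le (T : finType) (e : rel T) (k : nat) : Prop :=
  exists (I : finType) (t : rel I) (B : I -> {set T}),
    tree_decomposition e t B /\ forall i : I, #|B i| <= k.+1.

(* Main.v *)
Require Import Defs.
From mathcomp Require Import all_boot.
From mathcomp Require Import zify.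
Set Implicit Arguments. Unset Strict Implicit. Unset Printing Implicit Defensive.

Definition tp (N : nat) : rel 'I_N := fun a b => ((nat_of_ord a).+1 == nat_of_ord b) || ((nat_of_ord b).+1 == nat_of_ord a).

Arguments tp {N}.

Lemma tp_sym N : symmetric (@tp N).
Proof. by move=> a b; rewrite /tp orbC. Qed.

Lemma tp_irr N : irreflexive (@tp N).
Proof. by move=> a; rewrite /tp; apply/negP => /orP [] /eqP; lia. Qed.

Lemma tp_conn_aux N (P : pred 'I_N) d : forall i j : 'I_N, nat_of_ord j = nat_of_ord i + d ->
  (forall l : 'I_N, i <= l <= j -> P l) ->
  connect [rel a b | [&& tp a b, P a & P b]] i j.
Proof.
elim: d => [|d IH] i j hj hP.
  by have -> : j = i by apply/val_inj; rewrite /= hj addn0.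
have hlt : nat_of_ord i + d < N by have := ltn_ord j; rewrite -[nat_of_ord j]/(nat_of_ord j) hj; lia.
pose j' : 'I_N := Ordinal hlt.
apply: (connect_trans (y := j')).
  apply: IH => //= l hl; apply: hP; lia.
apply: connect1 => /=; apply/and3P; split.
- by rewrite /tp /= hj addnS eqxx.
- apply: hP => /=; lia.
- apply: hP => /=; lia.
Qed.

Lemma tp_conn N (P : pred 'I_N) (i j : 'I_N) :
  (forall l : 'I_N, minn i j <= l <= maxn i j -> P l) ->
  connect [rel a b | [&& tp a b, P a & P b]] i j.
Proof.
move=> hP.
have sym : symmetric [rel a b | [&& tp a b, P a & P b]].
  by move=> a b /=; rewrite tp_sym; case: (P a); case: (P b).
case: (leqP i j) => hij.
  apply: (@tp_conn_aux N P (j - i)); first lia.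
  move=> l hl; apply: hP; lia.
rewrite (sym_connect_sym sym).
apply: (@tp_conn_aux N P (i - j)); first lia.
move=> l hl; apply: hP; lia.
Qed.

Lemma tp_nocycle N : ~ has_cycle (@tp N).
Proof.
move=> [x [p [sz u pa cl]]].
set c := x :: p.
have cyc : cycle (@tp N) c by rewrite /c /= rcons_path pa cl.
have xc : x \in c by rewrite inE eqxx.
case: (arg_maxnP (fun i : 'I_N => nat_of_ord i) xc) => m mc mmax.
set k := index m c.
have kc : k < size c by rewrite index_mem.
set c' := rot k c.
have cyc' : cycle (@tp N) c' by rewrite rot_cycle.
have u' : uniq c' by rewrite rot_uniq.
have mem' : forall z, z \in c' -> nat_of_ord z <= nat_of_ord m by move=> z; rewrite mem_rot => /mmax.
have ec : c' = m :: (drop k.+1 c ++ take k c).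
  by rewrite /c' /rot (drop_nth m kc) nth_index.
rewrite ec in cyc' u' mem'.
have sz' : size (drop k.+1 c ++ take k c) >= 2.
  rewrite size_cat size_drop size_take kc; move: kc sz; rewrite /c /=; lia.
move: cyc' u' mem' sz'.
case: (drop k.+1 c ++ take k c) => [|a [|a1 q1]] //= /andP [hma].
rewrite rcons_path => /andP [_ hbm] /andP [_ /andP [ha _]] hmem _.
have am : nat_of_ord a <= nat_of_ord m by apply: hmem; rewrite !inE eqxx orbT.
set b := last a1 q1 in hbm.
have bin : b \in a1 :: q1 by apply: mem_last.
have bm : nat_of_ord b <= nat_of_ord m by apply: hmem; rewrite in_cons; apply/orP; right; rewrite in_cons bin orbT.
have eab : a = b.
  case/andP: hbm => _ hbm; apply/val_inj => /=; case/orP: hma => /eqP h1; case/orP: hbm => /eqP h2; lia.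
by move: ha; rewrite eab bin.
Qed.

Lemma tp_tree N : is_tree (@tp N).
Proof.
split.
- by split; [apply: tp_sym | apply: tp_irr].
- move=> i j; have := @tp_conn N predT i j.
  move=> /(_ (fun _ _ => isT)); apply: connect_sub => a b /= /andP [h _].
  exact: connect1.
- exact: tp_nocycle.
Qed.

Section Decomp.
Variables (T : finType) (e : rel T) (key : T -> nat) (M : nat).
Hypotheses (esym : symmetric e) (eirr : irreflexive e) (kinj : injective key)
  (kM : forall v, key v <= M)
  (umb : forall x z y, key x < key z -> key z < key y -> e x y -> e x z || e z y).

Definition bag (k : nat) : {set T} :=
  [set v | (key v <= k) && ((key v == k) || [exists w, e v w && (k <= key w)])].

Lemma bag_card k : #|bag k| <= 2 * max_degree e \/ #|bag k| <= 1.
Proof.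
case: (pickP [pred v | (key v <= k) && [exists w, e v w && (k <= key w)]]) => [x0 hx0 | none].
  left.
  case: (arg_minnP key hx0) => x /andP [xk /existsP [y /andP [exy ky]]] xmin.
  have sub : bag k \subset [set u | e x u] :|: [set u | e y u].
    apply/subsetP => v; rewrite inE => /andP [kv hv]; rewrite !inE.
    case: (eqVneq v x) => [-> | vx]; first by rewrite (esym y x) exy orbT.
    case: (eqVneq v y) => [-> | vy]; first by rewrite exy.
    have h1 : key x < key v.
      rewrite ltn_neqAle; apply/andP; split.
        by apply/negP => /eqP /kinj ex; move: vx; rewrite ex eqxx.
      case/orP: hv => [/eqP -> // | hex]; apply: xmin => /=; by rewrite kv hex.
    have h2 : key v < key y.
      rewrite ltn_neqAle; apply/andP; split.
        by apply/negP => /eqP /kinj ex; move: vy; rewrite ex eqxx.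
      exact: leq_trans kv ky.
    by case/orP: (umb h1 h2 exy) => [-> // | h]; rewrite (esym y v) h orbT.
  apply: leq_trans (subset_leq_card sub) _.
  rewrite cardsU; apply: leq_trans (leq_subr _ _) _.
  rewrite mul2n -addnn; apply: leq_add.
    exact: (leq_bigmax (F := fun v => degree e v) x).
  exact: (leq_bigmax (F := fun v => degree e v) y).
right.
case: (set_0Vmem (bag k)) => [-> | [v0 hv0]]; first by rewrite cards0.
have sub : bag k \subset [set v0].
  have hk : forall v, v \in bag k -> key v = k.
    move=> v; rewrite inE => /andP [kv /orP [/eqP // | hex]].
    by have := none v; rewrite /= kv hex.
  apply/subsetP => v hv; rewrite inE; apply/eqP/kinj; by rewrite (hk _ hv) (hk _ hv0).
by rewrite -(cards1 v0); apply: subset_leq_card.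
Qed.

Lemma decomp : (exists u v, e u v) -> treewidth_le e (2 * max_degree e).-1.
Proof.
move=> [u0 [v0 e0]].
have Dpos : 0 < max_degree e.
  apply: leq_trans (leq_bigmax (F := fun v => degree e v) u0).
  by rewrite /degree card_gt0; apply/set0Pn; exists v0; rewrite inE.
exists ('I_M.+1 : finType), (@tp M.+1), (fun i : 'I_M.+1 => bag i); split; last first.
  move=> i; rewrite prednK ?muln_gt0 ?Dpos //.
  case: (bag_card i) => // h; apply: leq_trans h _; by rewrite muln_gt0 Dpos.
split.
- exact: tp_tree.
- move=> v; exists (inord (key v)); by rewrite inE inordK ?ltnS // leqnn eqxx.
- move=> u v euv.
  have hin : forall a b, e a b -> key a < key b -> exists i : 'I_M.+1, (a \in bag i) && (b \in bag i).
    move=> a b eab hab; exists (inord (key b)); rewrite !inE inordK ?ltnS //.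
    rewrite leqnn eqxx (ltnW hab) /= andbT; apply/orP; right; apply/existsP; exists b; by rewrite eab leqnn.
  case: (ltngtP (key u) (key v)) => h.
  + exact: hin.
  + have [i hi] := hin v u (etrans (esym v u) euv) h.
    by exists i; rewrite andbC.
  + by move/kinj: h => huv; move: euv; rewrite huv eirr.
- move=> v i j hi hj; apply: tp_conn => l hl.
  have H : forall k, v \in bag k -> key v < k -> exists w, e v w && (k <= key w).
    move=> k; rewrite inE => /andP [_ /orP [/eqP -> | /existsP //]]; by rewrite ltnn.
  have kvi : key v <= i by move: hi; rewrite inE => /andP [].
  have kvj : key v <= j by move: hj; rewrite inE => /andP [].
  rewrite inE.
  have kvl : key v <= l by apply: leq_trans _ (proj1 (andP hl)); rewrite leq_min kvi kvj.
  rewrite kvl /=; case: (eqVneq (key v) l) => //= kl.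
  have kvl' : key v < l by rewrite ltn_neqAle kl kvl.
  case: (leqP l i) => li.
    have [w /andP [ew iw]] := H _ hi (leq_trans kvl' li).
    apply/existsP; exists w; by rewrite ew (leq_trans li iw).
  have lj : l <= j.
    by have := proj2 (andP hl); move: li; clear; lia.
  have [w /andP [ew jw]] := H _ hj (leq_trans kvl' lj).
  apply/existsP; exists w; by rewrite ew (leq_trans lj jw).
Qed.
End Decomp.

Lemma key_exists (T : finType) (e : rel T) :
  simple_graph e -> cocomparability_graph e ->
  exists key : T -> nat, [/\ injective key, forall v, key v <= #|T| * #|T| &
    forall x z y, key x < key z -> key z < key y -> e x y -> e x z || e z y].
Proof.
move=> [esy eirr] [r [[rrefl [rasym rtr]] hr]].
pose cnt x := #|[set y | r y x && (y != x)]|.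
pose key x := cnt x * #|T| + enum_rank x.
have rk : forall x : T, (enum_rank x : nat) < #|T| by move=> x; exact: (ltn_ord (enum_rank x)).
have clt : forall a b, r a b -> a != b -> cnt a < cnt b.
  move=> a b rab ab; apply: proper_card; apply/properP; split.
    apply/subsetP => z; rewrite !inE => /andP [rza za].
    rewrite (rtr _ _ _ rza rab) /=; apply/negP => /eqP zb.
    by move: ab; rewrite (rasym a b) ?eqxx // rab -zb rza.
  exists a; first by rewrite !inE rab ab.
  by rewrite !inE eqxx andbF.
have klt : forall a b, r a b -> a != b -> key a < key b.
  move=> a b rab ab; have := clt a b rab ab; have := rk a; rewrite /key; nia.
exists key; split.
- move=> a b hab.
  have : key a %% #|T| = key b %% #|T| by rewrite hab.
  rewrite /key !modnMDl !modn_small // => /val_inj; exact: enum_rank_inj.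
- move=> v; have : cnt v <= #|T|.-1.
    rewrite -(cardsC1 v); apply: subset_leq_card; apply/subsetP => z.
    by rewrite !inE => /andP [_].
  have := rk v; rewrite /key; nia.
- move=> x z y hxz hzy exy; apply/negPn/negP; rewrite negb_or => /andP [nxz nzy].
  have xz : x != z by apply/negP => /eqP ex; move: hxz; rewrite ex ltnn.
  have zy : z != y by apply/negP => /eqP ex; move: hzy; rewrite ex ltnn.
  have xy : x != y by apply/negP => /eqP ex; move: (ltn_trans hxz hzy); rewrite ex ltnn.
  have rxz : r x z.
    have := hr x z xz; rewrite /complement_rel xz nxz /= => /esym /orP [//|rzx].
    by have := klt _ _ rzx; rewrite eq_sym xz => /(_ isT); rewrite ltnNge (ltnW hxz).
  have rzy : r z y.
    have := hr z y zy; rewrite /complement_rel zy nzy /= => /esym /orP [//|ryz].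
    by have := klt _ _ ryz; rewrite eq_sym zy => /(_ isT); rewrite ltnNge (ltnW hzy).
  have := hr x y xy; rewrite /complement_rel xy exy (rtr _ _ _ rxz rzy) //.
Qed.

Theorem lemma13 (T : finType) (e : rel T) :
  simple_graph e -> cocomparability_graph e ->
  (exists u v : T, e u v) ->
  treewidth_le e (2 * max_degree e).-1.
Proof.
move=> sg cc ex.
have [key [kinj kM umb]] := key_exists sg cc.
case: sg => esym eirr.
exact: (decomp esym eirr kinj kM umb ex).
Qed.
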